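(* Let $k$ be an algebraically closed field, let $\lambda$ be a partition of $n$ (with $\lambda_j=0$ beyond its length), and let $\mathcal O_\lambda\subseteq\mathfrak{gl}_n(k)$ be the nilpotent orbit of matrices with Jordan block sizes $\lambda$. For each $i\in\{1,\dots,n-1\}$ there exists $X\in\mathcal O_\lambda$ such that $X_{\le i,\le i}$ has stable rank exactly $d_{\lambda,i}:=i-\sum_{j>n-i}\lambda_j$.
   Context: $X_{\le i,\le i}$ is the submatrix of the first $i$ rows and columns. For an $i\times i$ matrix $Y$, $s_j(Y)$ is the sum of the principal $j\times j$ minors of $Y$; the stable rank of $Y$ is the largest $j$ with $s_j(Y)\ne0$, equivalently the number of nonzero eigenvalues counted with algebraic multiplicity. *)

(* Defs.v *)
From HB Require Import structures.
From mathcomp Require Import all_boot all_order all_algebra.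
Set Implicit Arguments. Unset Strict Implicit. Unset Printing Implicit Defensive.
Import Order.TTheory GRing.Theory Num.Theory.
Local Open Scope ring_scope.

Definition is_partition (n : nat) (la : seq nat) : bool :=
  [&& sorted geq la, 0%N \notin la & sumn la == n].

Definition block_starts (la : seq nat) : seq nat :=
  [seq sumn (take t la) | t <- iota 0 (size la).+1].

(* The nilpotent Jordan matrix with blocks of sizes la_1, la_2, ... along the
   diagonal (ones on the superdiagonal inside each block). *)
Definition jordan_nil (k : nzRingType) (n : nat) (la : seq nat) : 'M[k]_n :=
  \matrix_(a < n, b < n)
    (if (b == a.+1 :> nat) && (nat_of_ord b \notin block_starts la) then 1 else 0).

Definition nil_orbit (k : fieldType) (n : nat) (la : seq nat) (X : 'M[k]_n) : Prop :=
  exists2 P : 'M[k]_n, P \in unitmx & X = P *m jordan_nil k n la *m invmx P.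

Definition lead_submx (k : Type) (n i : nat) (h : (i <= n)%N) (X : 'M[k]_n) : 'M[k]_i :=
  \matrix_(a < i, b < i) X (widen_ord h a) (widen_ord h b).

Definition principal_minor (k : comNzRingType) (m : nat) (Y : 'M[k]_m) (S : {set 'I_m}) : k :=
  \det (\matrix_(a < #|S|, b < #|S|) Y (enum_val a) (enum_val b)).

Definition sum_pminors (k : comNzRingType) (m : nat) (Y : 'M[k]_m) (j : nat) : k :=
  \sum_(S : {set 'I_m} | #|S| == j) principal_minor Y S.

(* stable rank: the largest j with s_j(Y) != 0 (s_0 = 1, and s_j = 0 for j > m). *)
Definition stable_rank (k : comNzRingType) (m : nat) (Y : 'M[k]_m) : nat :=
  \max_(j < m.+1 | sum_pminors Y j != 0) j.

(* d_{la,i} = i - sum_{j > n - i} la_j   (la_j 1-indexed, 0 beyond the length) *)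
Definition d_lam (n : nat) (la : seq nat) (i : nat) : nat :=
  (i - \sum_(n - i <= t < n) nth 0%N la t)%N.

(* Main.v *)
Require Import Defs.
From HB Require Import structures.
From mathcomp Require Import all_boot all_order all_algebra all_fingroup.
From mathcomp Require Import zify ring.
Set Implicit Arguments. Unset Strict Implicit. Unset Printing Implicit Defensive.
Import Order.TTheory GRing.Theory Num.Theory.
Local Open Scope ring_scope.


Lemma sum_ind (k : nzRingType) (m x : nat) (F : nat -> k) :
  \sum_(c < m) ((c == x :> nat)%:R * F c) = if (x < m)%N then F x else 0.
Proof.
case: ifP => hx.
  rewrite (bigD1 (Ordinal hx)) //= eqxx mul1r big1 ?addr0 // => c /eqP hc.
  have -> : (c == x :> nat) = false by apply/negbTE/eqP => e; apply: hc; apply: val_inj.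
  by rewrite mul0r.
rewrite big1 // => c _.
have -> : (c == x :> nat) = false.
  by apply/negbTE/eqP => e; move: (ltn_ord c); rewrite e hx.
by rewrite mul0r.
Qed.

Definition gD (k : nzRingType) (M : nat) : 'M[k]_M.+1 :=
  \matrix_(a, b) ('C(M - b, M - a))%:R.
Definition gG (k : nzRingType) (M : nat) : 'M[k]_M.+1 :=
  \matrix_(a, c) (if c == 0 :> nat then (a == 0 :> nat)%:R - ('C(M.+1, M - a))%:R
                  else ((a == c :> nat) || (c == a.+1 :> nat))%:R).
Definition Jb (k : nzRingType) (m : nat) : 'M[k]_m :=
  \matrix_(a, b) (b == a.+1 :> nat)%:R.

Lemma binP N j : ('C(N, j) + (0 < j) * 'C(N, j.-1) = 'C(N.+1, j))%N.
Proof. by case: j => [|j] /=; rewrite ?bin0 ?muln0 ?addn0 // mul1n binS. Qed.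

Lemma gadget (k : comNzRingType) M : gG k M *m gD k M = gD k M *m Jb k M.+1.
Proof.
apply/matrixP => a b; rewrite !mxE.
rewrite big_ord_recl /= !mxE /=.
under eq_bigr => c _ do rewrite !mxE /= /bump /= add1n.
rewrite (eq_bigr (fun c : 'I_M => (c == a.-1 :> nat)%:R * ((0 < a)%N%:R * ('C(M - b, M - (nat_of_ord c).+1))%:R)
   + (c == a :> nat)%:R * ('C(M - b, M - (nat_of_ord c).+1))%:R)); last first.
  move=> c _; case: (a : nat) => [|a'] /=; first by rewrite mul0r mulr0 add0r.
  rewrite eqSS [a' == c]eq_sym mul1r.
  case: (eqVneq (c:nat) a') => [->|ne]; first by rewrite (ltn_eqF (ltnSn a')) /= mul1r mul0r addr0.
  by rewrite eqSS /= mul0r add0r.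
rewrite big_split /= (sum_ind M (a.-1) (fun c => (0 < a)%N%:R * ('C(M - b, M - c.+1))%:R : k)) (sum_ind M a (fun c => ('C(M - b, M - c.+1))%:R : k)).
rewrite (eq_bigr (fun c : 'I_M.+1 => (c == b.-1 :> nat)%:R * ((0 < b)%N%:R * ('C(M - c, M - a))%:R))); last first.
  move=> c _; rewrite !mxE; case: (b : nat) => [|b'] /=; first by rewrite mulr0 !mul0r mulr0.
  by rewrite eqSS eq_sym; case: eqP => _; rewrite ?mulr1 ?mul1r ?mulr0 ?mul0r.
rewrite (sum_ind M.+1 b.-1 (fun c => (0 < b)%N%:R * ('C(M - c, M - a))%:R : k)).
have binR N j : ('C(N.+1, j))%:R = ('C(N, j))%:R + (if (0 < j)%N then ('C(N, j.-1))%:R else 0) :> k.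
  by rewrite -binP natrD; case: (0 < j)%N; rewrite ?mul1n ?mul0n.
case: a b => [a ha] [b hb] /=.
have haM : (a <= M)%N by [].
have hbM : (b <= M)%N by [].
case: b hb hbM => [|b] hb hbM /=.
  rewrite subn0 binn mulr1 mul0r binR.
  case: a ha haM => [|a] ha haM /=.
    rewrite subn0 binn subn1 /= mul0r; case: (0 < M)%N => /=; ring.
  rewrite -subnS subn_gt0 mul1r haM /=.
  case: (a.+1 < M)%N => /=; ring.
rewrite (ltnW hb) mul1r subn0 (bin_small (n := M - b.+1)); last by lia.
rewrite mulr0 add0r (_ : M - b = (M - b.+1).+1)%N; last by lia.
rewrite binR.
case: a ha haM => [|a] ha haM /=.
  rewrite mul0r subn0 subn1 (@bin_small (M - b.+1) M); last by lia.
  by case: (0 < M)%N => /=; ring.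
rewrite mul1r -subnS subn_gt0 haM /=.
by case: (a.+1 < M)%N => /=; ring.
Qed.


Lemma gD_unit (k : fieldType) M : gD k M \in unitmx.
Proof.
rewrite unitmxE det_trig.
  rewrite (eq_bigr (fun _ => 1)) ?prodr_const ?expr1n ?unitr1 // => i _.
  by rewrite mxE binn.
apply/forallP => i; apply/forallP => j; apply/implyP => hij.
rewrite mxE bin_small //; have := ltn_ord j; lia.
Qed.

Fixpoint Jr (k : nzRingType) (la : seq nat) : 'M[k]_(sumn la) :=
  match la with
  | [::] => 0
  | m :: l => block_mx (Jb k m) 0 0 (Jr k l)
  end.

Lemma block_starts_cons m l :
  block_starts (m :: l) = 0%N :: map (addn m) (block_starts l).
Proof.
rewrite /block_starts /= -map_comp (iotaDl 1 1) -map_comp.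
by do 2 congr (_ :: _); apply: eq_map => t /=.
Qed.

Lemma notin_map_addn m x s : (x < m)%N -> x \notin map (addn m) s.
Proof. by move=> h; apply/mapP => [[y _ e]]; lia. Qed.

Lemma bs0 l : 0%N \in block_starts l.
Proof. by rewrite /block_starts /= inE take0. Qed.

Lemma jordan_Jr (k : nzRingType) la : jordan_nil k (sumn la) la = Jr k la.
Proof.
elim: la => [|m l IH] /=; first by apply/matrixP => [[]].
apply/matrixP => a b.
rewrite -(splitK a) -(splitK b).
case: (split a) => a'; case: (split b) => b';
  rewrite ?block_mxEul ?block_mxEur ?block_mxEdl ?block_mxEdr !mxE /= block_starts_cons inE.
- case: eqP => [e|_]; last by [].
  have h : (a'.+1 < m)%N by rewrite -e ltn_ord.
  by rewrite e (negbTE (notin_map_addn _ h)) orbF.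
- case: eqP => [e|_]; last by [].
  have e' : (m + b' = m + 0)%N by have := ltn_ord a'; lia.
  by rewrite e' (mem_map (@addnI m)) bs0 orbT.
- by case: eqP => [e|_] //; have := ltn_ord b'; lia.
- rewrite -IH !mxE -addnS eqn_add2l (mem_map (@addnI m)).
  by case: eqP => [->|] //=; rewrite addnS.
Qed.


Definition core_prop (k : fieldType) (la : seq nat) (o : nat) :=
 exists G D : 'M[k]_(sumn la), exists out : 'I_(sumn la) -> bool,
 [/\ D \in unitmx, G *m D = D *m Jr k la, (\sum_a (out a : nat) = o)%N,
     (forall a b, ~~ out a -> ~~ out b -> (b < a)%N -> G a b = 0) /\
     (forall a, ~~ out a -> G a a != 0 -> G a a = 1)
   & (\sum_a (~~ out a && (G a a != 0%R) : nat) = (sumn la - o) - sumn (drop o la))%N].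

Lemma Jr_entry (k : nzRingType) la (a b : 'I_(sumn la)) :
  Jr k la a b != 0 -> (b == a.+1 :> nat).
Proof.
rewrite -jordan_Jr mxE => h; apply: contraTT h => /negbTE ->; by rewrite /= eqxx.
Qed.

Lemma core0 (k : fieldType) la : core_prop k la 0.
Proof.
exists (Jr k la), 1%:M, (fun _ => false); split; first exact: unitmx1.
- by rewrite mulmx1 mul1mx.
- by rewrite big1.
- split.
 move=> a b _ _ hba; apply/eqP; apply: contraTT hba => /Jr_entry/eqP ->.
  by rewrite -leqNgt leqW.
  by move=> a _ /Jr_entry; rewrite (ltn_eqF (ltnSn a)).
- rewrite drop0 subn0 subnn big1 // => a _.
  by case: eqP => // /eqP /Jr_entry; rewrite (ltn_eqF (ltnSn a)).
Qed.

Lemma size_le_sumn (l : seq nat) : 0%N \notin l -> (size l <= sumn l)%N.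
Proof.
elim: l => [|m l IH] //=; rewrite inE negb_or => /andP [hm hl].
have := IH hl; rewrite eq_sym in hm; move: hm; case: m => //= m _; lia.
Qed.

Lemma drop_bound (l : seq nat) (o : nat) : 0%N \notin l -> (o <= sumn l)%N -> (o + sumn (drop o l) <= sumn l)%N.
Proof.
elim: l o => [|m l IH] o /=; first by rewrite addn0.
rewrite inE negb_or => /andP [hm hl] ho.
case: o ho => [|o] ho /=; first by [].
have hm1 : (0 < m)%N by rewrite lt0n eq_sym.
case: (leqP o (sumn l)) => h; first by have := IH o hl h; lia.
rewrite drop_oversize /=; first by lia.
have := size_le_sumn hl; lia.
Qed.

Lemma split_l m n (x : 'I_m) : split (lshift n x) = inl x.
Proof. exact: (unsplitK (inl x : 'I_m + 'I_n)). Qed.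
Lemma split_r m n (y : 'I_n) : split (rshift m y) = inr y.
Proof. exact: (unsplitK (inr y : 'I_m + 'I_n)). Qed.

Lemma sum_lt (m o1 : nat) : (\sum_(i < m) (i < o1 : nat))%N = minn m o1.
Proof.
elim: m => [|m IH]; first by rewrite big_ord0 min0n.
rewrite big_ord_recr /= IH; case: ltnP => h /=; lia.
Qed.

Lemma sum_ge (m o1 : nat) : (\sum_(i < m) (~~ (i < o1) : nat))%N = (m - minn m o1)%N.
Proof.
elim: m => [|m IH]; first by rewrite big_ord0.
rewrite big_ord_recr /= IH; case: ltnP => h /=; lia.
Qed.

Lemma core (k : fieldType) (la : seq nat) (o : nat) : 0%N \notin la -> (o <= sumn la)%N -> core_prop k la o.
Proof.
elim: la o => [|m l IH] o hz ho.
  by move: ho; rewrite leqn0 => /eqP ->; apply: core0.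
case: o ho => [|o] ho; first exact: core0.
move: hz; rewrite inE negb_or => /andP [hm hl].
case: m hm ho => [//|M] _ ho.
set n' := sumn l.
pose o' := minn o n'.
pose o1 := (o.+1 - o')%N.
have ho' : (o' <= n')%N by rewrite geq_minr.
have [G' [D' [out' [hD' hGD' hout' [htri' hdiag'] hcnt']]]] := IH o' hl ho'.
have ho1 : (1 <= o1 <= M.+1)%N by rewrite /o1 /o'; move: ho; rewrite /= -/n'; lia.
exists (block_mx (gG k M) 0 0 G'), (block_mx (gD k M) 0 0 D').
exists (fun a => match split a with inl x => (x < o1)%N | inr y => out' y end).
split.
- by rewrite unitmxE det_ublock unitrM -!unitmxE gD_unit hD'.
- by rewrite /= !mulmx_block !mulmx0 !mul0mx !addr0 !add0r gadget hGD'.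
- rewrite big_split_ord.
  under eq_bigr do rewrite split_l.
  rewrite /=. under [X in (_ + X)%N]eq_bigr do rewrite split_r.
  rewrite hout' sum_lt; lia.
- split.
    move=> a b; rewrite -[a]splitK -[b]splitK.
    case: (split a) => x; case: (split b) => y; rewrite !unsplitK /=.
    - rewrite block_mxEul mxE => hx hy hyx.
      case: eqP => [e|_]; first by move: hy ho1; rewrite e; lia.
      have -> : ((x == y :> nat) || (y == x.+1 :> nat)) = false by lia.
      by [].
    - by rewrite block_mxEur mxE.
    - by rewrite block_mxEdl mxE.
    - by rewrite block_mxEdr ltn_add2l; apply: htri'.
  move=> a; rewrite -[a]splitK; case: (split a) => x; rewrite !unsplitK /=.
  - rewrite block_mxEul mxE => hx _.
    case: eqP => [e|_]; first by move: hx ho1; rewrite e; lia.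
    by rewrite eqxx.
  - by rewrite block_mxEdr; apply: hdiag'.
- rewrite big_split_ord.
  under eq_bigr do rewrite split_l block_mxEul.
  rewrite /=. under [X in (_ + X)%N]eq_bigr do rewrite split_r block_mxEdr.
  rewrite hcnt'.
  rewrite (eq_bigr (fun x : 'I_M.+1 => (~~ (x < o1)%N : nat))); last first.
    move=> x _; case: ltnP => //= hx; rewrite mxE.
    have -> : (x == 0 :> nat) = false by lia.
    by rewrite eqxx oner_neq0.
  rewrite sum_ge /= -/n'.
  have hsz := size_le_sumn hl.
  case: (leqP o n') => hon.
    rewrite /o1 /o' (minn_idPl hon); have := @drop_bound l o hl hon; lia.
  rewrite /o1 /o' (minn_idPr (ltnW hon)) !drop_oversize /=; lia.
Qed.


Lemma enum_set_sorted (m : nat) (S : {set 'I_m}) :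
  sorted (fun x y : 'I_m => (x < y)%N) (enum S).
Proof.
have -> : enum S = [seq x <- enum 'I_m | x \in S].
  rewrite /enum_mem -filter_predI; apply: eq_filter => x; by rewrite /= andbT.
apply: sorted_filter; first by move=> x y z; apply: ltn_trans.
by have := iota_ltn_sorted 0 m; rewrite -val_enum_ord sorted_map.
Qed.

Lemma enum_val_mono (m : nat) (S : {set 'I_m}) (x y : 'I_#|S|) :
  (x < y)%N -> (enum_val x < enum_val y)%N.
Proof.
move=> hxy; have x0 := enum_val x; rewrite (enum_val_nth x0 x) (enum_val_nth x0 y).
apply: (sorted_ltn_nth (leT := fun x y : 'I_m => (x < y)%N)) => //.
- by move=> a b c; apply: ltn_trans.
- exact: enum_set_sorted.
- by rewrite inE -cardE ltn_ord.
- by rewrite inE -cardE ltn_ord.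
Qed.

Lemma pminor_triu (k : fieldType) m (Y : 'M[k]_m) (S : {set 'I_m}) :
  (forall a b : 'I_m, (b < a)%N -> Y a b = 0) ->
  principal_minor Y S = \prod_(a in S) Y a a.
Proof.
move=> htri; rewrite /principal_minor -det_tr det_trig.
  by rewrite [RHS]big_enum_val; apply: eq_bigr => x _; rewrite !mxE.
apply/forallP => x; apply/forallP => y; apply/implyP => hxy.
by rewrite !mxE htri // enum_val_mono.
Qed.


Lemma stable_rank_triu (k : fieldType) m (Y : 'M[k]_m) :
  (forall a b : 'I_m, (b < a)%N -> Y a b = 0) ->
  (forall a, Y a a != 0 -> Y a a = 1) ->
  stable_rank Y = (\sum_a (Y a a != 0%R : nat))%N.
Proof.
move=> htri hdiag.
set Sup := [set a | Y a a != 0].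
have hprod S : principal_minor Y S = (S \subset Sup)%:R.
  rewrite pminor_triu //; case: (boolP (S \subset Sup)) => hS.
    rewrite big1 // => a ha; apply: hdiag; have := subsetP hS a ha; by rewrite inE.
  move/subsetPn: hS => [a ha haS].
  rewrite (bigD1 a) //= (_ : Y a a = 0) ?mul0r //.
  by apply/eqP; move: haS; rewrite inE negbK.
have hbig j : (#|Sup| < j)%N -> sum_pminors Y j = 0.
  move=> hj; rewrite /sum_pminors big1 // => S /eqP hS.
  rewrite hprod; case: (boolP (S \subset Sup)) => // hsub.
  by have := subset_leq_card hsub; rewrite hS leqNgt hj.
have hd : sum_pminors Y #|Sup| = 1.
  rewrite /sum_pminors (bigD1 Sup) //= hprod subxx big1 ?addr0 // => S /andP [/eqP hS hne].
  rewrite hprod; case: (boolP (S \subset Sup)) => // hsub.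
  by move: hne; rewrite eqEcard hsub hS leqnn.
have -> : (\sum_a (Y a a != 0%R : nat))%N = #|Sup|.
  rewrite -sum1_card [RHS]big_mkcond; apply: eq_bigr => a _; rewrite inE; by case: (Y a a != 0).
rewrite /stable_rank; apply/eqP; rewrite eqn_leq; apply/andP; split.
  apply/bigmax_leqP => j hj; rewrite leqNgt; apply: contra hj => hjd.
  by rewrite hbig // eqxx.
have hm : (#|Sup| < m.+1)%N by rewrite ltnS; apply: leq_trans (max_card _) _; rewrite card_ord.
apply: (leq_trans _ (leq_bigmax_cond (Ordinal hm) _)) => //=.
by rewrite hd oner_neq0.
Qed.


Lemma sum_count N (p : pred 'I_N) : (\sum_a (p a : nat))%N = count p (enum 'I_N).
Proof.
rewrite -sum1_count big_enum_cond [RHS]big_mkcond /=; apply: eq_bigr => a _.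
by case: (p a).
Qed.

Lemma sumn_nth (s : seq nat) N : (size s <= N)%N -> sumn s = (\sum_(0 <= t < N) nth 0%N s t)%N.
Proof.
elim: s N => [|x s IH] N /=.
  by move=> _; rewrite big1_seq // => t _; rewrite nth_nil.
case: N => [//|N] h; rewrite big_nat_recl //= (IH N) //.
Qed.

Lemma sumn_drop (s : seq nat) N o : (size s <= N)%N -> (o <= N)%N ->
  sumn (drop o s) = (\sum_(o <= t < N) nth 0%N s t)%N.
Proof.
move=> hs ho; rewrite (sumn_nth (N := N - o)); last by rewrite size_drop; lia.
rewrite -[o in RHS]add0n big_addn; apply: eq_bigr => t _; by rewrite nth_drop addnC.
Qed.

Unset Implicit Arguments.

Theorem lemma2p3 (k : closedFieldType) (n : nat) (la : seq nat)
  (hla : is_partition n la) (i : nat) (hi1 : (1 <= i)%N) (hin : (i < n)%N) :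
  exists X : 'M[k]_n,
    @nil_orbit k n la X /\ stable_rank (lead_submx (ltnW hin) X) = d_lam n la i.
Proof.
move: (hla) => /and3P [_ hz /eqP hn].
subst n.
set N := sumn la in hin *.
pose o := (N - i)%N.
have [G [D [out [hD hGD hout [htri hdiag] hcnt]]]] := core k hz (leq_subr i N).
pose C := [seq a <- enum 'I_N | ~~ out a].
pose L := C ++ [seq a <- enum 'I_N | out a].
have hsC : size C = i.
  have := count_predC out (enum 'I_N).
  rewrite size_enum_ord -sum_count hout => h.
  rewrite /C size_filter; rewrite /o in h.
  have -> : count (fun a => ~~ out a) (enum 'I_N) = count (predC out) (enum 'I_N) by [].
  lia.
have hsL : size L = N.
  rewrite size_cat !size_filter -[RHS](size_enum_ord N) -(count_predC out) addnC.
  by [].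
have huL : uniq L.
  have hdis : ~~ has (in_mem^~ (mem C)) [seq a <- enum 'I_N | out a].
    apply/hasPn => x; rewrite mem_filter => /andP [hx _].
    by rewrite mem_filter hx.
  by rewrite cat_uniq hdis; apply/and3P; split => //; apply: filter_uniq; apply: enum_uniq.
have f_inj : injective (fun q : 'I_N => nth q L q).
  move=> q q' e; apply/val_inj/eqP.
  rewrite -(nth_uniq q _ _ huL) ?hsL ?ltn_ord // e.
  by rewrite (set_nth_default q' q) // hsL ltn_ord.
pose s := perm f_inj.
exists (\matrix_(q, q') G (s q) (s q')).
split.
  exists (perm_mx s *m D); first by rewrite unitmx_mul unitmx_perm hD.
  have hX : \matrix_(q, q') G (s q) (s q') = perm_mx s *m G *m perm_mx s^-1.
    by rewrite -row_permE -col_permE; apply/matrixP => q q'; rewrite !mxE.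
  have hXP : \matrix_(q, q') G (s q) (s q') *m (perm_mx s *m D) = perm_mx s *m D *m Jr k la.
    rewrite hX -!mulmxA (mulmxA (perm_mx s^-1)) -perm_mxM mulVg perm_mx1 mul1mx hGD.
    by rewrite mulmxA.
  rewrite jordan_Jr -hXP mulmxK //.
  by rewrite unitmx_mul unitmx_perm hD.
have hN0 : (0 < N)%N by apply: leq_ltn_trans hin.
pose d0 : 'I_N := Ordinal hN0.
have hsw (a : 'I_i) : s (widen_ord (ltnW hin) a) = nth d0 C a.
  rewrite permE /= nth_cat hsC ltn_ord.
  by rewrite (set_nth_default d0) // hsC ltn_ord.
have hin_C (a : 'I_i) : ~~ out (nth d0 C a).
  have := mem_nth d0 (_ : (a < size C)%N); rewrite hsC => /(_ (ltn_ord a)).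
  by rewrite mem_filter => /andP [].
have hsortC : sorted (fun x y : 'I_N => (x < y)%N) C.
  apply: sorted_filter; first by move=> x y z; apply: ltn_trans.
  by have := iota_ltn_sorted 0 N; rewrite -val_enum_ord sorted_map.
have hmono (a b : 'I_i) : (b < a)%N -> (nth d0 C b < nth d0 C a)%N.
  move=> hba; apply: (sorted_ltn_nth (leT := fun x y : 'I_N => (x < y)%N)) => //.
  - by move=> x y z; apply: ltn_trans.
  - by rewrite inE hsC ltn_ord.
  - by rewrite inE hsC ltn_ord.
rewrite stable_rank_triu; first last.
- by move=> a; rewrite !mxE hsw; apply: hdiag.
- by move=> a b hba; rewrite !mxE !hsw; apply: htri => //; apply: hmono.
rewrite (eq_bigr (fun a : 'I_i => (G (nth d0 C a) (nth d0 C a) != 0 : nat))); last first.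
  by move=> a _; rewrite !mxE hsw.
rewrite -(big_mkord xpredT (fun a => (G (nth d0 C a) (nth d0 C a) != 0 : nat))).
rewrite -hsC -(big_nth d0 xpredT (fun x => (G x x != 0 : nat))).
rewrite big_filter big_enum_cond [X in (X = _)%N]big_mkcond /=.
rewrite (eq_bigr (fun x => (~~ out x && (G x x != 0) : nat))); last first.
  by move=> x _; case: (out x).
rewrite hcnt /d_lam -(sumn_drop (s := la) (N := N)).
- rewrite hsC; have hNe : N = sumn la by [].
  have hin2 : (i < sumn la)%N by rewrite -hNe.
  lia.
- exact: size_le_sumn.
- exact: leq_subr.
Qed.
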